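(* Let $d,p\ge1$, $X=(X_1,\dots,X_d)\in\mathbb{R}^d$, $\Sigma$ a symmetric positive definite $d\times d$ matrix with $S=\Sigma^{-1}=(s_{lm})$, and let $h(\mathbf{x})=\sum_{\mathbf{k}\in\Omega}a_{\mathbf{k}}H_{\mathbf{k}}(\mathbf{x})$ with real coefficients $a_{\mathbf{k}}$, where $\Omega=\{\mathbf{k}\in\mathbb{N}^d:|\mathbf{k}|_1\le p\}$. Suppose the real family $(\tilde\varphi_{\mathbf{k}})$ satisfies the recursion system (R) for $(S,X,(a_\mathbf{k}),p)$, and let $C$ be the associated constant defined below. Then $\varphi(\mathbf{x}):=\sum_{\mathbf{k}\in\Omega}\tilde\varphi_{\mathbf{k}}H_{\mathbf{k}}(\mathbf{x})$ satisfies, for all $\mathbf{x}\in\mathbb{R}^d$, $$-(\mathbf{x}-X)^T\Sigma^{-1}\nabla\varphi(\mathbf{x})+\Delta\varphi(\mathbf{x})=-h(\mathbf{x})+C,$$ equivalently $\nabla^T\big(\mathcal{N}(\mathbf{x};X,\Sigma)\nabla\varphi(\mathbf{x})\big)=(-h(\mathbf{x})+C)\,\mathcal{N}(\mathbf{x};X,\Sigma)$.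
   Context: Multi-index notation: $\mathbf{k}=(k_1,\dots,k_d)\in\mathbb{N}^d$, $|\mathbf{k}|_1=\sum_l k_l$, $\mathbf{e}_l$ is the $l$-th standard unit vector. $H_k$ denotes the (physicists') Hermite polynomial of degree $k$ ($H_0=1$, $H_1(x)=2x$, $H_{k+1}(x)=2xH_k(x)-2kH_{k-1}(x)$), and $H_{\mathbf{k}}(\mathbf{x})=\prod_{l=1}^dH_{k_l}(x_l)$. $\mathcal{N}(\mathbf{x};\mu,\Sigma)$ is the Gaussian density with mean $\mu$ and covariance $\Sigma$. Recursion system (R) for $(S,X,(a_\mathbf{k}),p)$, with $S=(s_{lm})$ symmetric: the family $(\tilde\varphi_{\mathbf{k}})_{\mathbf{k}\in\mathbb{Z}^d}$ satisfies $\tilde\varphi_{\mathbf{k}}=0$ whenever $|\mathbf{k}|_1>p$ or some component of $\mathbf{k}$ is negative, and for every $\mathbf{q}\in\mathbb{N}^d$ with $1\le|\mathbf{q}|_1\le p$: $$\sum_{l=1}^d s_{ll}q_l\tilde\varphi_{\mathbf{q}}+\sum_{l\ne m}s_{lm}(q_m+1)\tilde\varphi_{\mathbf{q}+\mathbf{e}_m-\mathbf{e}_l}=a_{\mathbf{q}}+\sum_{l,m=1}^d 2s_{lm}(q_m+1)X_l\tilde\varphi_{\mathbf{q}+\mathbf{e}_m}-\sum_{l\neq m}2s_{lm}(q_m+1)(q_l+1)\tilde\varphi_{\mathbf{q}+\mathbf{e}_m+\mathbf{e}_l}+\sum_{l=1}^d2(2-s_{ll})(q_l+1)(q_l+2)\tilde\varphi_{\mathbf{q}+2\mathbf{e}_l}.$$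 The associated constant is $C:=a_{\mathbf{0}}+\sum_{l,m=1}^d2s_{lm}X_l\tilde\varphi_{\mathbf{e}_m}-\sum_{l\ne m}2s_{lm}\tilde\varphi_{\mathbf{e}_m+\mathbf{e}_l}+\sum_{l=1}^d4(2-s_{ll})\tilde\varphi_{2\mathbf{e}_l}$. ($\tilde\varphi_{\mathbf 0}$ is arbitrary.) *)

(* Defs.v *)
From HB Require Import structures.
From mathcomp Require Import all_boot all_order all_algebra.
From mathcomp Require Import all_classical all_reals all_analysis.
Set Implicit Arguments. Unset Strict Implicit. Unset Printing Implicit Defensive.
Import Order.TTheory GRing.Theory Num.Theory.
Import numFieldNormedType.Exports.
Local Open Scope ring_scope.

Section Defs.
Variable R : realType.

(* (H_n x, H_{n+1} x) for the physicists' Hermite polynomials *)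
Fixpoint hermite_pair (n : nat) (x : R) : R * R :=
  match n with
  | 0 => (1, 2 * x)
  | n'.+1 => let: (a, b) := hermite_pair n' x in
             (b, 2 * x * b - 2 * (n'.+1)%:R * a)
  end.

Definition hermite (n : nat) (x : R) : R := (hermite_pair n x).1.

Variable d : nat.

Definition hermiteM (k : 'I_d -> nat) (x : 'rV[R]_d) : R :=
  \prod_(l < d) hermite (k l) (x 0 l).

Definition norm1 (k : 'I_d -> nat) : nat := (\sum_(l < d) k l)%N.

(* Sum over Omega = { k in N^d : |k|_1 <= p } ; every such k has
   components <= p, so it is enumerated by {ffun 'I_d -> 'I_p.+1}. *)
Definition sumOmega (p : nat) (F : ('I_d -> nat) -> R) : R :=
  \sum_(k : {ffun 'I_d -> 'I_p.+1} | (norm1 (fun l => k l) <= p)%N)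
     F (fun l => nat_of_ord (k l)).

Definition zidx (k : 'I_d -> nat) : 'I_d -> int := fun l => (k l)%:Z.
Definition evec (m : 'I_d) : 'I_d -> int := fun i => (i == m)%:Z.
Definition addz (u v : 'I_d -> int) : 'I_d -> int := fun i => u i + v i.
Definition subz (u v : 'I_d -> int) : 'I_d -> int := fun i => u i - v i.

Definition phi_support (p : nat) (phi : ('I_d -> int) -> R) : Prop :=
  forall k : 'I_d -> int,
    ((exists l, k l < 0) \/ (\sum_(l < d) k l > p%:Z)) -> phi k = 0.

Definition recursion_eq (S : 'M[R]_d) (X : 'rV[R]_d) (a : ('I_d -> nat) -> R)
  (phi : ('I_d -> int) -> R) (q : 'I_d -> nat) : Prop :=
  let qz := zidx q in
  \sum_(l < d) S l l * (q l)%:R * phi qz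
  + \sum_(l < d) \sum_(m < d | m != l)
       S l m * (q m).+1%:R * phi (subz (addz qz (evec m)) (evec l))
  = a q
  + \sum_(l < d) \sum_(m < d)
       2 * S l m * (q m).+1%:R * X 0 l * phi (addz qz (evec m))
  - \sum_(l < d) \sum_(m < d | m != l)
       2 * S l m * (q m).+1%:R * (q l).+1%:R
         * phi (addz (addz qz (evec m)) (evec l))
  + \sum_(l < d)
       2 * (2 - S l l) * (q l).+1%:R * (q l).+2%:R
         * phi (addz qz (addz (evec l) (evec l))).

Definition recursion_system (S : 'M[R]_d) (X : 'rV[R]_d)
  (a : ('I_d -> nat) -> R) (p : nat) (phi : ('I_d -> int) -> R) : Prop :=
  phi_support p phi /\
  forall q : 'I_d -> nat, (1 <= norm1 q <= p)%N -> recursion_eq S X a phi q.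

Definition assoc_const (S : 'M[R]_d) (X : 'rV[R]_d)
  (a : ('I_d -> nat) -> R) (phi : ('I_d -> int) -> R) : R :=
  let z := zidx (fun _ => 0%N) in
  a (fun _ => 0%N)
  + \sum_(l < d) \sum_(m < d) 2 * S l m * X 0 l * phi (addz z (evec m))
  - \sum_(l < d) \sum_(m < d | m != l)
       2 * S l m * phi (addz (addz z (evec m)) (evec l))
  + \sum_(l < d) 4 * (2 - S l l) * phi (addz z (addz (evec l) (evec l))).

Definition ebasis (l : 'I_d) : 'rV[R]_d := delta_mx 0 l.

Definition partial (l : 'I_d) (f : 'rV[R]_d -> R) : 'rV[R]_d -> R :=
  fun x => 'D_(ebasis l) f x.

Definition laplacian (f : 'rV[R]_d -> R) (x : 'rV[R]_d) : R :=
  \sum_(l < d) partial l (partial l f) x.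

End Defs.

(* Main.v *)
Require Import Defs.
From HB Require Import structures.
From mathcomp Require Import all_boot all_order all_algebra.
From mathcomp Require Import all_classical all_reals all_analysis.
From mathcomp Require Import ring lra zify.
Import Order.TTheory GRing.Theory Num.Theory.
Import numFieldNormedType.Exports.
Local Open Scope ring_scope.


Section Herm.
Variable R : realType.

Lemma hermite0 (x : R) : hermite 0 x = 1. Proof. by []. Qed.

Lemma hermiteS (n : nat) (x : R) : hermite n.+1 x = (hermite_pair n x).2.
Proof. by rewrite /hermite /=; case: (hermite_pair n x). Qed.

Lemma hermite_rec (n : nat) (x : R) :
  hermite n.+1 x = 2 * x * hermite n x - 2 * n%:R * hermite n.-1 x.
Proof.
case: n => [|n]; first by rewrite /hermite /= mulr0n mulr0 mul0r subr0 mulr1.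
rewrite /= !hermiteS /hermite /=; case E: (hermite_pair n x) => [a b] /=.
by [].
Qed.
End Herm.

Set Implicit Arguments. Unset Strict Implicit. Unset Printing Implicit Defensive.

Section Der.
Variable R : realType.

Lemma dM (f g : R -> R) (df dg a : R) : is_derive a 1 f df -> is_derive a 1 g dg ->
  is_derive a 1 (fun t => f t * g t) (f a * dg + g a * df).
Proof. move=> hf hg; exact: is_deriveM. Qed.

Lemma dB (f g : R -> R) (df dg a : R) : is_derive a 1 f df -> is_derive a 1 g dg ->
  is_derive a 1 (fun t => f t - g t) (df - dg).
Proof. move=> hf hg; exact: is_deriveB. Qed.

Lemma dD (f g : R -> R) (df dg a : R) : is_derive a 1 f df -> is_derive a 1 g dg ->
  is_derive a 1 (fun t => f t + g t) (df + dg).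
Proof. move=> hf hg; exact: is_deriveD. Qed.

Lemma dC (c a : R) : is_derive a 1 (fun t : R => c) 0.
Proof. exact: is_derive_cst. Qed.

Lemma dId (a : R) : is_derive a 1 (fun t : R => t) 1.
Proof. exact: is_derive_id. Qed.

Lemma dext (f g : R -> R) (df dg a : R) : is_derive a 1 f df -> (forall t, f t = g t) -> df = dg ->
  is_derive a 1 g dg.
Proof. by move=> h /funext <- <-. Qed.

Lemma hermite_der (c a : R) n :
  is_derive a 1 (fun t => hermite n (t + c)) (2 * n%:R * hermite n.-1 (a + c)).
Proof.
suff: forall n, is_derive a 1 (fun t => hermite n (t + c)) (2 * n%:R * hermite n.-1 (a + c))
  /\ is_derive a 1 (fun t => hermite n.+1 (t + c)) (2 * n.+1%:R * hermite n (a + c)) by move=> /(_ n) [].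
elim=> [|m [IH1 IH2]].
  split.
    apply: (dext (dC 1 a)); first by move=> t; rewrite hermite0.
    by rewrite mulr0 mul0r.
  apply: (dext (dM (dC 2 a) (dD (dId a) (dC c a)))).
    by move=> t; rewrite hermite_rec hermite0 /= mulr0 mul0r subr0 mulr1.
  by rewrite hermite0; ring.
split=> //.
apply: (dext (dB (dM (dM (dC 2 a) (dD (dId a) (dC c a))) IH2) (dM (dC (2 * m.+1%:R) a) IH1))).
  by move=> t; rewrite (@hermite_rec _ m.+1).
rewrite (@hermite_rec _ m) !mulrS; ring.
Qed.
End Der.

Set Implicit Arguments. Unset Strict Implicit. Unset Printing Implicit Defensive.

Section Multi.
Variable R : realType.
Variable d : nat.

Definition Hz (k : 'I_d -> int) (x : 'rV[R]_d) : R :=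
  \prod_(l < d) hermite `|k l|%N (x 0 l).

Lemma partialE (f : 'rV[R]_d -> R) m y :
  partial m f y = 'D_1 (fun h : R => f (h *: ebasis R m + y)) 0.
Proof.
rewrite /partial /derive; congr (lim (_ @ 0^'))%classic; apply: funext => h /=.
by rewrite addr0 scale0r add0r [_%:A]mulr1.
Qed.

Lemma is_derive_big (I : finType) (f : I -> R -> R) (df : I -> R) (a : R) :
  (forall i, is_derive a 1 (f i) (df i)) ->
  is_derive a 1 (fun t => \sum_i f i t) (\sum_i df i).
Proof.
move=> H; rewrite /index_enum; elim: (Finite.enum I) => [|i r IH].
  apply: (dext (dC 0 a)) => [t|]; by rewrite big_nil.
apply: (dext (dD (H i) IH)) => [t|]; by rewrite big_cons.
Qed.

Lemma line_coord m (y : 'rV[R]_d) (h : R) l :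
  (h *: ebasis R m + y) 0 l = (if l == m then h else 0) + y 0 l.
Proof. by rewrite !mxE /=; case: eqP => _; rewrite ?mulr1 ?mulr0. Qed.

Definition dHz (k : 'I_d -> int) m (y : 'rV[R]_d) : R :=
  2 * `|k m|%N%:R * hermite `|k m|%N.-1 (y 0 m) *
  \prod_(l < d | l != m) hermite `|k l|%N (y 0 l).

Lemma Hz_line k m y (h : R) : Hz k (h *: ebasis R m + y) =
  hermite `|k m|%N (h + y 0 m) * \prod_(l < d | l != m) hermite `|k l|%N (y 0 l).
Proof.
rewrite /Hz (bigD1 m) //= line_coord eqxx; congr (_ * _).
by apply: eq_bigr => l hl; rewrite line_coord (negbTE hl) add0r.
Qed.

Lemma is_derive_Hz (k : 'I_d -> int) (m : 'I_d) (y : 'rV[R]_d) :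
  is_derive (0:R) (1:R) (fun h : R => Hz k (h *: ebasis R m + y)) (dHz k m y).
Proof.
apply: (dext (dM (hermite_der (y 0 m) 0 `|k m|%N) (dC (\prod_(l < d | l != m) hermite `|k l|%N (y 0 l)) 0))).
  by move=> t; rewrite Hz_line.
by rewrite /dHz add0r; ring.
Qed.

Lemma partial_sum (I : finType) (c : I -> R) (k : I -> 'I_d -> int) m y :
  partial m (fun x => \sum_i c i * Hz (k i) x) y = \sum_i c i * dHz (k i) m y.
Proof.
rewrite partialE; apply: derive_val.
apply: is_derive_big => i.
apply: (dext (dM (dC (c i) 0) (is_derive_Hz (k i) m y))) => //.
by rewrite mulr0 addr0.
Qed.

Definition evec' (m : 'I_d) : 'I_d -> int := fun i => (i == m)%:Z.

Lemma dHz_eq k m y : 0 <= k m ->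
  dHz k m y = 2 * (k m)%:~R * Hz (fun i => k i - (i == m)%:Z) y.
Proof.
move=> km; rewrite /dHz /Hz [in RHS](bigD1 m) //= eqxx.
have [->|kpos] := eqVneq (k m) 0; first by rewrite /= !mulr0 !mul0r.
have e : `|k m - 1|%N = `|k m|%N.-1 by lia.
rewrite e mulrA; congr (_ * _ * _); last first.
  by apply: eq_bigr => l hl; rewrite (negbTE hl) subr0.
congr (_ * _); rewrite -[in RHS](gez0_abs km) //.
Qed.
End Multi.

Set Implicit Arguments. Unset Strict Implicit. Unset Printing Implicit Defensive.

Section Box.
Variable R : realType.
Variables d p : nat.

Definition NN := (9 + p)%N.
Definition Bx := {ffun 'I_d -> 'I_NN}.
Definition toZ (j : Bx) : 'I_d -> int := fun l => (j l)%:Z - 4.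

Definition cycv (s : int) (a : nat) : nat := ((a + `|(s + NN%:Z)%R|) %% NN)%N.

Definition cyc (s : 'I_d -> int) (j : Bx) : Bx :=
  [ffun l => Ordinal (@ltn_pmod (j l + `|(s l + NN%:Z)%R|) NN isT)].

Lemma cyc_val (a : nat) (s : int) : -2 <= s <= 2 -> (a < NN)%N ->
  [\/ (0 <= a%:Z + s < NN%:Z) /\ (cycv s a)%:Z = a%:Z + s,
      (a%:Z + s < 0) /\ (cycv s a)%:Z = a%:Z + s + NN%:Z |
      (NN%:Z <= a%:Z + s) /\ (cycv s a)%:Z = a%:Z + s - NN%:Z].
Proof.
move=> /andP[s1 s2] ha; rewrite /cycv; rewrite /NN in ha *.
have [h1|h1] := ltP (a%:Z + s) 0.
  constructor 2; split => //.
  rewrite modn_small; lia.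
have [h2|h2] := ltP (a%:Z + s) (9 + p)%:Z.
  constructor 1; split; first by apply/andP.
  have -> : (a + `|(s + (9 + p)%:Z)%R|)%N = (`|(a%:Z + s)%R| + (9 + p))%N by lia.
  rewrite modnDr modn_small; lia.
constructor 3; split => //.
have -> : (a + `|(s + (9 + p)%:Z)%R|)%N = (`|(a%:Z + s - (9 + p)%:Z)%R| + (9 + p) + (9 + p))%N by lia.
rewrite !modnDr modn_small; lia.
Qed.

Lemma cycK (s : 'I_d -> int) : (forall i, -2 <= s i <= 2) ->
  cancel (cyc s) (cyc (fun i => - s i)).
Proof.
move=> hs j; apply/ffunP => l; apply: val_inj; rewrite !ffunE /=.
have := cyc_val (hs l) (ltn_ord (j l)); rewrite -/(cycv _ _); set t := cycv _ _ => ht.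
have hl : (t < NN)%N by apply: ltn_pmod.
rewrite -/(cycv (s l) (j l)) -/t -/(cycv _ t).
have hs' : -2 <= - s l <= 2 by move: (hs l) => /andP[? ?]; apply/andP; split; lia.
have := cyc_val hs' hl; set t' := cycv _ _ => ht'.
have hj := ltn_ord (j l).
suff : t'%:Z = (j l)%:Z by lia.
move: ht ht' => [] [? ?] [] [? ?]; lia.
Qed.

Lemma aux1 (a s : int) : a + s < 0 -> a - 4 + s < -2.
Proof. lia. Qed.
Lemma aux2 (a : nat) (s c : int) : -2 <= s -> c = a%:Z + s + NN%:Z -> p%:Z + 2 < c - 4.
Proof. rewrite /NN; lia. Qed.
Lemma aux3 (a s : int) : NN%:Z <= a + s -> p%:Z + 2 < a - 4 + s.
Proof. rewrite /NN; lia. Qed.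
Lemma aux4 (a : nat) (s c : int) : (a < NN)%N -> s <= 2 -> c = a%:Z + s - NN%:Z -> c - 4 < -2.
Proof. rewrite /NN; lia. Qed.

Lemma shift_sum (G : ('I_d -> int) -> R) (s : 'I_d -> int) :
  (forall (k : 'I_d -> int) (i : 'I_d), k i < -2 -> G k = 0) ->
  (forall (k : 'I_d -> int) (i : 'I_d), p%:Z + 2 < k i -> G k = 0) ->
  (forall i, -2 <= s i <= 2) ->
  \sum_(j : Bx) G (fun l => toZ j l + s l) = \sum_(j : Bx) G (toZ j).
Proof.
move=> G1 G2 hs.
rewrite [RHS](reindex_inj (can_inj (cycK hs))).
apply: eq_bigr => j _.
case: (boolP [forall l, (0 <= (j l)%:Z + s l) && ((j l)%:Z + s l < NN%:Z)]).
  move/forallP => hin; congr G; apply: funext => l.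
  rewrite /toZ ffunE /= -/(cycv (s l) (j l)).
  have := cyc_val (hs l) (ltn_ord (j l)).
  move: (hin l) => /andP[h1 h2] [[_ hb]|[h3 hb]|[h3 hb]].
  - by rewrite hb addrAC.
  - by move: (le_lt_trans h1 h3); rewrite ltxx.
  - by move: (lt_le_trans h2 h3); rewrite ltxx.
move/forallPn => [l]; rewrite negb_and -!ltNge => hl.
have := cyc_val (hs l) (ltn_ord (j l)).
have hj := ltn_ord (j l).
move: (hs l) => /andP[hs1 hs2].
case => [] [h1 h2].
  move: hl h1 => /orP[] h /andP[h1a h1b].
    by move: (le_lt_trans h1a h); rewrite ltxx.
  by rewrite h1b in h.
  rewrite (G1 _ l); last by rewrite /toZ /=; apply: aux1.
  by rewrite (G2 _ l) // /toZ ffunE /= -/(cycv (s l) (j l)); apply: (aux2 hs1 h2).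
rewrite (G2 _ l); last by rewrite /toZ /=; apply: aux3.
by rewrite (G1 _ l) // /toZ ffunE /= -/(cycv (s l) (j l)); apply: (aux4 hj hs2 h2).
Qed.

Lemma sum_natz (k : 'I_d -> nat) : (norm1 k)%:Z = \sum_(l < d) (zidx k) l.
Proof. by rewrite /norm1 -natz natr_sum; apply: eq_bigr => l _; rewrite natz. Qed.

Lemma sum_ge_one (k : 'I_d -> int) l : (forall i, 0 <= k i) -> k l <= \sum_(i < d) k i.
Proof.
move=> h; rewrite (bigD1 l) //= lerDl; apply: sumr_ge0 => i _; exact: h.
Qed.

Definition inOm (k : 'I_d -> int) : Prop :=
  ((exists l, k l < 0) \/ (\sum_(l < d) k l > p%:Z)).

Lemma auxA (a : nat) : (a < 4)%N -> a%:Z - 4 < 0.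
Proof. lia. Qed.
Lemma auxB (a : nat) : (p + 4 < a)%N -> p%:Z < a%:Z - 4.
Proof. lia. Qed.

Lemma sumOmega_box (G : ('I_d -> int) -> R) :
  (forall (k : 'I_d -> int), inOm k -> G k = 0) ->
  sumOmega p (fun k => G (zidx k)) = \sum_(j : Bx) G (toZ j).
Proof.
move=> G0.
pose P := fun j : Bx => [forall l, (4 <= j l <= p + 4)%N].
rewrite (bigID P) /= [X in _ + X]big1 ?addr0; last first.
  move=> j /forallPn [l]; rewrite negb_and -!ltnNge => hl.
  apply: G0.
  case: (boolP [exists i, toZ j i < 0]).
    by move/existsP => [i hi]; left; exists i.
  move/existsPn => hn; right.
  have hl' : p%:Z < toZ j l.
    move: hl => /orP[hl|hl]; last by apply: auxB.
    by have := hn l; rewrite /toZ (auxA hl).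
  apply: (lt_le_trans hl'); apply: sum_ge_one => i.
  by have := hn i; rewrite -leNgt.
have hN : forall (k : {ffun 'I_d -> 'I_p.+1}) l, (k l + 4 < NN)%N.
  by move=> k l; have := ltn_ord (k l); rewrite /NN; lia.
pose h := fun k : {ffun 'I_d -> 'I_p.+1} => ([ffun l => inord (k l + 4)] : Bx).
pose h' := fun j : Bx => ([ffun l => inord (j l - 4)] : {ffun 'I_d -> 'I_p.+1}).
rewrite (reindex_onto h h'); last first.
  move=> j /forallP hj; apply/ffunP => l; apply: val_inj.
  have := hj l; move=> /andP[h1 h2].
  rewrite /h /h' !ffunE /= (@inordK p); last lia.
  rewrite inordK; rewrite /NN in h1 h2 *; lia.
rewrite /sumOmega big_mkcond /= [RHS](eq_bigl xpredT); last first.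
  move=> k; apply/andP; split.
    apply/forallP => l; rewrite /h ffunE inordK //; have := ltn_ord (k l); lia.
  apply/eqP/ffunP => l; apply: val_inj; rewrite /h /h' !ffunE /=.
  rewrite (@inordK (8 + p)) ?hN // addnK inordK //.
apply: eq_bigr => k _.
have -> : toZ (h k) = zidx (fun l => k l).
  by apply: funext => l; rewrite /toZ /h /zidx ffunE inordK // PoszD addrK.
case: ifP => // hk; apply/esym/G0; right.
by rewrite -sum_natz ltz_nat ltnNge hk.
Qed.

End Box.

Set Implicit Arguments. Unset Strict Implicit. Unset Printing Implicit Defensive.

Section Main.
Variables (R : realType) (d p : nat).
Variable (Phi : ('I_d -> int) -> R).
Hypothesis vanish : forall k, inOm p k -> Phi k = 0.

Lemma int_nat (z : int) : 0 <= z -> exists n : nat, z = n%:Z.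
Proof. by move=> hz; exists `|z|%N; rewrite gez0_abs. Qed.

Lemma xHz (k : 'I_d -> int) l (x : 'rV[R]_d) : 0 <= k l ->
  2 * x 0 l * Hz k x = Hz (addz k (evec l)) x + 2 * (k l)%:~R * Hz (subz k (evec l)) x.
Proof.
move=> /int_nat [n hn].
rewrite /Hz (bigD1 l) //= [X in _ = X + _](bigD1 l) //= [X in _ = _ + _ * X](bigD1 l) //=.
rewrite /addz /subz /evec eqxx hn.
have E1 : \prod_(i < d | i != l) hermite `|addz k (evec l) i|%N (x 0 i)
   = \prod_(i < d | i != l) hermite `|k i|%N (x 0 i).
  by apply: eq_bigr => i hi; rewrite /addz /evec (negbTE hi) addr0.
have E2 : \prod_(i < d | i != l) hermite `|subz k (evec l) i|%N (x 0 i)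
   = \prod_(i < d | i != l) hermite `|k i|%N (x 0 i).
  by apply: eq_bigr => i hi; rewrite /subz /evec (negbTE hi) subr0.
rewrite /addz /subz /evec in E1 E2; rewrite E1 E2.
set P := \prod_(i < d | i != l) _.
have -> : `|(n%:Z + 1)%R|%N = n.+1 by rewrite -PoszD addn1.
case: n hn => [|n] hn.
  by rewrite hermite_rec /= mulr0z; ring.
have -> : `|(n.+1%:Z - (true : nat)%:Z)%R|%N = n by rewrite -addn1 PoszD addrK.
rewrite (@hermite_rec _ n.+1) /=.
have -> : (n.+1%:Z)%:~R = n.+1%:R :> R by [].
ring.
Qed.

Lemma inOm_neg (k : 'I_d -> int) i : k i < 0 -> inOm p k.
Proof. by move=> h; left; exists i. Qed.

Lemma inOm_big (k : 'I_d -> int) i : p%:Z < k i -> inOm p k.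
Proof.
move=> h; case: (boolP [exists i, k i < 0]).
  by move/existsP => [j hj]; left; exists j.
move/existsPn => hn; right.
apply: (lt_le_trans h); apply: sum_ge_one => j.
by have := hn j; rewrite -leNgt.
Qed.

Lemma auxC (a b : int) : -2 <= b <= 2 -> a < -2 -> a - b < 0.
Proof. lia. Qed.
Lemma auxD (a b : int) : -2 <= b <= 2 -> p%:Z + 2 < a -> p%:Z < a - b.
Proof. lia. Qed.

Lemma shiftT (c : ('I_d -> int) -> R) (sg t : ('I_d -> int) -> ('I_d -> int))
  (s : 'I_d -> int) (x : 'rV[R]_d) :
  (forall i, -2 <= s i <= 2) -> (forall k i, sg k i = k i + s i) ->
  (forall k i, t k i = k i - s i) ->
  \sum_(j : Bx d p) Phi (toZ j) * c (toZ j) * Hz (sg (toZ j)) x =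
  \sum_(j : Bx d p) Phi (t (toZ j)) * c (t (toZ j)) * Hz (toZ j) x.
Proof.
move=> hs hsg ht.
have := @shift_sum R d p (fun k => Phi (t k) * c (t k) * Hz k x) s.
move=> <-.
- apply: eq_bigr => j _.
  have -> : t (fun l => toZ j l + s l) = toZ j.
    by apply: funext => i; rewrite ht addrK.
  have -> : sg (toZ j) = (fun l => toZ j l + s l) by apply: funext => i; rewrite hsg.
  by [].
- move=> k i hk; rewrite vanish ?mul0r //; apply: (@inOm_neg _ i); rewrite ht; exact: auxC.
- move=> k i hk; rewrite vanish ?mul0r //; apply: (@inOm_big _ i); rewrite ht; exact: auxD.
- exact: hs.
Qed.


Lemma auxE (z : int) : 0 <= z -> z != 0 -> 0 <= z - 1.
Proof. lia. Qed.

Lemma nonneg_of (k : 'I_d -> int) : Phi k != 0 -> forall i, 0 <= k i.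
Proof.
move=> hk i; rewrite leNgt; apply/negP => hi.
by move: hk; rewrite vanish ?eqxx //; apply: (@inOm_neg _ i).
Qed.

Definition PHI := fun x : 'rV[R]_d => sumOmega p (fun k => Phi (zidx k) * hermiteM k x).

Lemma phiE (x : 'rV[R]_d) : PHI x = \sum_(j : Bx d p) Phi (toZ j) * Hz (toZ j) x.
Proof.
apply: (@sumOmega_box R d p (fun k => Phi k * Hz k x)) => k hk.
by rewrite vanish ?mul0r.
Qed.

Lemma dphi m (y : 'rV[R]_d) : partial m PHI y =
  \sum_(j : Bx d p) Phi (toZ j) * (2 * (toZ j m)%:~R) * Hz (subz (toZ j) (evec m)) y.
Proof.
have -> : PHI = fun x => \sum_(j : Bx d p) Phi (toZ j) * Hz (toZ j) x.
  by apply: funext => x; rewrite phiE.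
rewrite partial_sum; apply: eq_bigr => j _.
have [h0|hn] := eqVneq (Phi (toZ j)) 0; first by rewrite h0 !mul0r.
by rewrite dHz_eq ?(nonneg_of hn) // !mulrA.
Qed.

Lemma ddphi l (y : 'rV[R]_d) : partial l (partial l PHI) y =
  \sum_(j : Bx d p) Phi (toZ j) * (4 * (toZ j l)%:~R * (toZ j l - 1)%:~R)
     * Hz (subz (subz (toZ j) (evec l)) (evec l)) y.
Proof.
have -> : partial l PHI = fun y => \sum_(j : Bx d p) (Phi (toZ j) * (2 * (toZ j l)%:~R))
     * Hz (subz (toZ j) (evec l)) y.
  by apply: funext => y'; rewrite dphi.
rewrite partial_sum; apply: eq_bigr => j _.
have [h0|hn] := eqVneq (Phi (toZ j)) 0; first by rewrite h0 !mul0r.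
have h1 := nonneg_of hn l.
have [hz|hz] := eqVneq (toZ j l) 0; first have e : (toZ j l)%:~R = 0 :> R by rewrite hz.
  by rewrite e !(mulr0, mul0r).
have h2 : 0 <= subz (toZ j) (evec l) l.
  by rewrite /subz /evec eqxx /=; exact: auxE h1 hz.
rewrite dHz_eq //.
rewrite /subz /evec eqxx /=.
ring.
Qed.

Lemma evecE (m : 'I_d) : evec m m = 1.
Proof. by rewrite /evec eqxx. Qed.
Lemma evecN (m i : 'I_d) : i != m -> evec m i = 0.
Proof. by rewrite /evec => /negbTE ->. Qed.

Lemma auxF (q : 'I_d -> int) m l : 0 <= q l -> 0 <= q m -> q m != 0 ->
  0 <= subz q (evec m) l.
Proof.
rewrite /subz; have [->|ne] := eqVneq l m; last by rewrite evecN // subr0.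
rewrite evecE => _ h1 h2; exact: auxE.
Qed.

Lemma expand l m (x : 'rV[R]_d) (Xl Slm : R) :
  (x 0 l - Xl) * Slm *
    (\sum_(j : Bx d p) Phi (toZ j) * (2 * (toZ j m)%:~R) * Hz (subz (toZ j) (evec m)) x)
  = \sum_(j : Bx d p) Phi (toZ j) * (Slm * (toZ j m)%:~R) * Hz (addz (subz (toZ j) (evec m)) (evec l)) x
  + \sum_(j : Bx d p) Phi (toZ j) * (2 * Slm * (toZ j m)%:~R * (subz (toZ j) (evec m) l)%:~R)
       * Hz (subz (subz (toZ j) (evec m)) (evec l)) x
  - \sum_(j : Bx d p) Phi (toZ j) * (2 * Slm * Xl * (toZ j m)%:~R) * Hz (subz (toZ j) (evec m)) x.
Proof.
rewrite mulr_sumr -big_split -sumrB /=; apply: eq_bigr => j _.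
have [h0|hn] := eqVneq (Phi (toZ j)) 0; first by rewrite h0 !(mulr0, mul0r, subr0, addr0).
have [hz|hz] := eqVneq (toZ j m) 0.
  have e : (toZ j m)%:~R = 0 :> R by rewrite hz.
  by rewrite e !(mulr0, mul0r, subr0, addr0).
have E := xHz x (auxF (nonneg_of hn l) (nonneg_of hn m) hz).
set H := Hz (subz (toZ j) (evec m)) x in E *.
set H1 := Hz (addz _ _) x in E *.
set H2 := Hz (subz (subz _ _) _) x in E *.
have E' : H1 = 2 * x 0 l * H - 2 * (subz (toZ j) (evec m) l)%:~R * H2 by rewrite E addrK.
rewrite E'; ring.
Qed.

Lemma evec01 (m i : 'I_d) : 0 <= evec m i <= 1.
Proof. by rewrite /evec; case: (i == m). Qed.
Lemma auxS1 (a b : int) : 0 <= a <= 1 -> 0 <= b <= 1 -> -2 <= a - b <= 2.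
Proof. lia. Qed.
Lemma auxS2 (a b : int) : 0 <= a <= 1 -> 0 <= b <= 1 -> -2 <= - a - b <= 2.
Proof. lia. Qed.
Lemma auxS3 (a : int) : 0 <= a <= 1 -> -2 <= - a <= 2.
Proof. lia. Qed.

Variables (S : 'M[R]_d) (X : 'rV[R]_d).

Definition tv1 l m (q : 'I_d -> int) := subz (addz q (evec m)) (evec l).
Definition tv2 l m (q : 'I_d -> int) := addz (addz q (evec m)) (evec l).
Definition tv3 (m : 'I_d) (q : 'I_d -> int) := addz q (evec m).
Definition tv4 (l : 'I_d) (q : 'I_d -> int) := addz q (addz (evec l) (evec l)).

Definition F1 l m q := Phi (tv1 l m q) * (S l m * (tv1 l m q m)%:~R).
Definition F2 l m q := Phi (tv2 l m q) *
  (2 * S l m * (tv2 l m q m)%:~R * (subz (tv2 l m q) (evec m) l)%:~R).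
Definition F3 l m q := Phi (tv3 m q) * (2 * S l m * X 0 l * (tv3 m q m)%:~R).
Definition F4 l q := Phi (tv4 l q) * (4 * (tv4 l q l)%:~R * (tv4 l q l - 1)%:~R).

Lemma Aeq l m (x : 'rV[R]_d) : (x 0 l - X 0 l) * S l m * partial m PHI x =
  \sum_(j : Bx d p) Hz (toZ j) x * (F1 l m (toZ j) + F2 l m (toZ j) - F3 l m (toZ j)).
Proof.
rewrite dphi expand.
rewrite (@shiftT (fun k => S l m * (k m)%:~R) (fun k => addz (subz k (evec m)) (evec l))
   (tv1 l m) (fun i => evec l i - evec m i) x); first last.
- by move=> k i; rewrite /tv1 /addz /subz; ring.
- by move=> k i; rewrite /addz /subz; ring.
- by move=> i; apply: auxS1; apply: evec01.
rewrite (@shiftT (fun k => 2 * S l m * (k m)%:~R * (subz k (evec m) l)%:~R)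
   (fun k => subz (subz k (evec m)) (evec l))
   (tv2 l m) (fun i => - evec m i - evec l i) x); first last.
- by move=> k i; rewrite /tv2 /addz /subz; ring.
- by move=> k i; rewrite /addz /subz; ring.
- by move=> i; apply: auxS2; apply: evec01.
rewrite (@shiftT (fun k => 2 * S l m * X 0 l * (k m)%:~R)
   (fun k => subz k (evec m)) (tv3 m) (fun i => - evec m i) x); first last.
- by move=> k i; rewrite /tv3 /addz /subz; ring.
- by move=> k i; rewrite /addz /subz; ring.
- by move=> i; apply: auxS3; apply: evec01.
rewrite -big_split -sumrB /=; apply: eq_bigr => j _.
rewrite /F1 /F2 /F3; ring.
Qed.

Lemma Beq l (x : 'rV[R]_d) : partial l (partial l PHI) x =
  \sum_(j : Bx d p) Hz (toZ j) x * F4 l (toZ j).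
Proof.
rewrite ddphi.
rewrite (@shiftT (fun k => 4 * (k l)%:~R * (k l - 1)%:~R)
   (fun k => subz (subz k (evec l)) (evec l)) (tv4 l) (fun i => - evec l i - evec l i) x); first last.
- by move=> k i; rewrite /tv4 /addz /subz; ring.
- by move=> k i; rewrite /addz /subz; ring.
- by move=> i; apply: auxS2; apply: evec01.
by apply: eq_bigr => j _; rewrite /F4 mulrC.
Qed.

Definition Kf (q : 'I_d -> int) : R :=
  - (\sum_(l < d) S l l * (q l)%:~R * Phi q
     + \sum_(l < d) \sum_(m < d | m != l)
         S l m * (q m + 1)%:~R * Phi (subz (addz q (evec m)) (evec l)))
  + \sum_(l < d) \sum_(m < d) 2 * S l m * (q m + 1)%:~R * X 0 l * Phi (addz q (evec m))
  - \sum_(l < d) \sum_(m < d | m != l)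
       2 * S l m * (q m + 1)%:~R * (q l + 1)%:~R * Phi (addz (addz q (evec m)) (evec l))
  + \sum_(l < d) 2 * (2 - S l l) * (q l + 1)%:~R * (q l + 2)%:~R
       * Phi (addz q (addz (evec l) (evec l))).

Lemma addzE (u v : 'I_d -> int) i : addz u v i = u i + v i. Proof. by []. Qed.
Lemma subzE (u v : 'I_d -> int) i : subz u v i = u i - v i. Proof. by []. Qed.

Lemma perl (q : 'I_d -> int) l :
  - (\sum_(m < d) (F1 l m q + F2 l m q - F3 l m q)) + F4 l q =
  - (S l l * (q l)%:~R * Phi q
     + \sum_(m < d | m != l) S l m * (q m + 1)%:~R * Phi (subz (addz q (evec m)) (evec l)))
  + \sum_(m < d) 2 * S l m * (q m + 1)%:~R * X 0 l * Phi (addz q (evec m))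
  - \sum_(m < d | m != l)
       2 * S l m * (q m + 1)%:~R * (q l + 1)%:~R * Phi (addz (addz q (evec m)) (evec l))
  + 2 * (2 - S l l) * (q l + 1)%:~R * (q l + 2)%:~R * Phi (addz q (addz (evec l) (evec l))).
Proof.
rewrite sumrB big_split /= [\sum_(m < d) F1 l m q](bigD1 l) //= [\sum_(m < d) F2 l m q](bigD1 l) //=.
have e1 : F1 l l q = S l l * (q l)%:~R * Phi q.
  rewrite /F1; have -> : tv1 l l q = q by apply: funext => i; rewrite /tv1 /subz /addz addrK.
  by rewrite mulrC.
have e2 : \sum_(m < d | m != l) F1 l m q =
   \sum_(m < d | m != l) S l m * (q m + 1)%:~R * Phi (subz (addz q (evec m)) (evec l)).
  apply: eq_bigr => m hm; rewrite /F1 /tv1 subzE addzE evecE evecN // subr0.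
  by rewrite mulrC.
have e3 : \sum_(m < d) F3 l m q =
   \sum_(m < d) 2 * S l m * (q m + 1)%:~R * X 0 l * Phi (addz q (evec m)).
  apply: eq_bigr => m _; rewrite /F3 /tv3 addzE evecE; ring.
have e4 : F2 l l q = 2 * S l l * (q l + 2)%:~R * (q l + 1)%:~R
     * Phi (addz q (addz (evec l) (evec l))).
  rewrite /F2; have -> : tv2 l l q = addz q (addz (evec l) (evec l)).
    by apply: funext => i; rewrite /tv2 /addz addrA.
  rewrite subzE !addzE evecE.
  have -> : q l + (1 + 1) - 1 = q l + 1 by ring.
  ring.
have e5 : \sum_(m < d | m != l) F2 l m q =
   \sum_(m < d | m != l)
       2 * S l m * (q m + 1)%:~R * (q l + 1)%:~R * Phi (addz (addz q (evec m)) (evec l)).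
  apply: eq_bigr => m hm; rewrite /F2 /tv2 subzE !addzE evecE evecN //.
  rewrite (@evecN m l) 1?eq_sym // evecE.
  have -> : q l + 0 + 1 - 0 = q l + 1 by ring.
  rewrite addr0; ring.
have e6 : F4 l q = 4 * (q l + 2)%:~R * (q l + 1)%:~R * Phi (addz q (addz (evec l) (evec l))).
  rewrite /F4 /tv4 !addzE evecE.
  have -> : q l + (1 + 1) - 1 = q l + 1 by ring.
  ring.
rewrite e1 e2 e3 e4 e5 e6; ring.
Qed.

Lemma Kf_eq q : Kf q =
  - (\sum_(l < d) \sum_(m < d) (F1 l m q + F2 l m q - F3 l m q)) + \sum_(l < d) F4 l q.
Proof.
rewrite -sumrN -big_split /= (eq_bigr _ (fun l _ => perl q l)).
rewrite /Kf !(big_split, sumrN, sumrB) /=.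
by [].
Qed.

Lemma LHS_eq (x : 'rV[R]_d) :
  - (\sum_(l < d) \sum_(m < d) (x 0 l - X 0 l) * S l m * partial m PHI x) + laplacian PHI x
  = \sum_(j : Bx d p) Hz (toZ j) x * Kf (toZ j).
Proof.
rewrite /laplacian.
rewrite (eq_bigr _ (fun l _ => eq_bigr _ (fun m _ => Aeq l m x))).
rewrite (eq_bigr _ (fun l _ => Beq l x)).
under eq_bigr => l _ do rewrite exchange_big /=.
rewrite exchange_big /= [X in _ + X]exchange_big /= -sumrN -big_split /=.
apply: eq_bigr => j _; rewrite Kf_eq mulrDr mulrN mulr_sumr; congr (- _ + _).
  by apply: eq_bigr => l _; rewrite mulr_sumr.
by rewrite mulr_sumr.
Qed.

Definition omb (q : 'I_d -> int) : bool := [forall l, 0 <= q l] && (\sum_(l < d) q l <= p%:Z).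

Lemma vz (r : R) k : inOm p k \/ r = 0 -> r * Phi k = 0.
Proof. by case=> [h|->]; [rewrite vanish // mulr0 | rewrite mul0r]. Qed.

Lemma castz0 (z : int) : z = 0 -> (z%:~R : R) = 0.
Proof. by move->. Qed.

Lemma sum_addz (u v : 'I_d -> int) : \sum_(i < d) addz u v i = \sum_i u i + \sum_i v i.
Proof. by rewrite -big_split. Qed.
Lemma sum_subz (u v : 'I_d -> int) : \sum_(i < d) subz u v i = \sum_i u i - \sum_i v i.
Proof. by rewrite -sumrB. Qed.
Lemma sum_evec (m : 'I_d) : \sum_(i < d) evec m i = 1.
Proof. by rewrite (bigD1 m) //= evecE big1 ?addr0 // => i hi; apply: evecN. Qed.

Lemma hN1 (z : int) : z < 0 -> z != -1 -> z + 1 < 0. Proof. lia. Qed.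
Lemma hN1' (z : int) : z = -1 -> z + 1 = 0. Proof. lia. Qed.
Lemma hN0 (z e : int) : z < 0 -> 0 <= e <= 1 -> z + 0 - e < 0. Proof. lia. Qed.
Lemma hN0' (z e : int) : z < 0 -> z + 1 - 0 < 0 -> z + 1 < 0. Proof. lia. Qed.
Lemma hN2 (z e f : int) : z < 0 -> e = 0 -> f = 0 -> z + e + f < 0. Proof. lia. Qed.
Lemma hN3 (z : int) : z < 0 -> z != -1 -> z != -2 -> z + 2 < 0. Proof. lia. Qed.
Lemma hN3' (z : int) : z = -2 -> z + 2 = 0. Proof. lia. Qed.
Lemma hS0 (s : int) : p%:Z < s -> p%:Z < s + 1 - 1. Proof. lia. Qed.
Lemma hS1 (s : int) : p%:Z < s -> p%:Z < s + 1. Proof. lia. Qed.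
Lemma hS2 (s : int) : p%:Z < s -> p%:Z < s + 1 + 1. Proof. lia. Qed.
Lemma hS3 (s : int) : p%:Z < s -> p%:Z < s + (1 + 1). Proof. lia. Qed.

Lemma not_omb q : ~~ omb q -> (exists i, q i < 0) \/ (p%:Z < \sum_(l < d) q l).
Proof.
rewrite negb_and => /orP[/forallPn [i hi]|hs]; first by left; exists i; rewrite ltNge.
by right; rewrite ltNge.
Qed.

Lemma Kf_vanish q : ~~ omb q -> Kf q = 0.
Proof.
move=> /not_omb [[i hi]|hs].
- have t1 : \sum_(l < d) S l l * (q l)%:~R * Phi q = 0.
    by apply: big1 => l _; apply: vz; left; left; exists i.
  have t2 : \sum_(l < d) \sum_(m < d | m != l)
         S l m * (q m + 1)%:~R * Phi (subz (addz q (evec m)) (evec l)) = 0.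
    apply: big1 => l _; apply: big1 => m hml; apply: vz.
    have [him|him] := eqVneq i m.
      rewrite -him in hml *.
      have [e|ne] := eqVneq (q i) (-1).
        by right; rewrite (castz0 (hN1' e)) mulr0.
      left; apply: (@inOm_neg _ i); rewrite subzE addzE evecE evecN // subr0.
      exact: hN1.
    left; apply: (@inOm_neg _ i); rewrite subzE addzE evecN //.
    exact: hN0 hi (evec01 l i).
  have t3 : \sum_(l < d) \sum_(m < d) 2 * S l m * (q m + 1)%:~R * X 0 l * Phi (addz q (evec m)) = 0.
    apply: big1 => l _; apply: big1 => m _; apply: vz.
    have [him|him] := eqVneq i m.
      rewrite -him.
      have [e|ne] := eqVneq (q i) (-1).
        by right; rewrite (castz0 (hN1' e)) mulr0 mul0r.
      left; apply: (@inOm_neg _ i); rewrite addzE evecE; exact: hN1.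
    by left; apply: (@inOm_neg _ i); rewrite addzE evecN // addr0.
  have t4 : \sum_(l < d) \sum_(m < d | m != l)
       2 * S l m * (q m + 1)%:~R * (q l + 1)%:~R * Phi (addz (addz q (evec m)) (evec l)) = 0.
    apply: big1 => l _; apply: big1 => m hml; apply: vz.
    have [him|him] := eqVneq i m.
      rewrite -him in hml *.
      have [e|ne] := eqVneq (q i) (-1).
        by right; rewrite (castz0 (hN1' e)) mulr0 mul0r.
      left; apply: (@inOm_neg _ i); rewrite !addzE evecE evecN // addr0; exact: hN1.
    have [hil|hil] := eqVneq i l.
      rewrite -hil.
      have [e|ne] := eqVneq (q i) (-1).
        by right; rewrite (castz0 (hN1' e)) mulr0.
      left; apply: (@inOm_neg _ i); rewrite !addzE evecE evecN // addr0; exact: hN1.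
    by left; apply: (@inOm_neg _ i); rewrite !addzE !evecN // !addr0.
  have t5 : \sum_(l < d) 2 * (2 - S l l) * (q l + 1)%:~R * (q l + 2)%:~R
       * Phi (addz q (addz (evec l) (evec l))) = 0.
    apply: big1 => l _; apply: vz.
    have [hil|hil] := eqVneq i l.
      rewrite -hil.
      have [e|ne] := eqVneq (q i) (-1).
        by right; rewrite (castz0 (hN1' e)) mulr0 mul0r.
      have [e2|ne2] := eqVneq (q i) (-2).
        by right; rewrite (castz0 (hN3' e2)) mulr0.
      left; apply: (@inOm_neg _ i); rewrite !addzE evecE; exact: hN3.
    by left; apply: (@inOm_neg _ i); rewrite !addzE evecN // !addr0.
  by rewrite /Kf t1 t2 t3 t4 t5 !(addr0, oppr0, subr0).
- have t1 : \sum_(l < d) S l l * (q l)%:~R * Phi q = 0.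
    by apply: big1 => l _; apply: vz; left; right.
  have t2 : \sum_(l < d) \sum_(m < d | m != l)
         S l m * (q m + 1)%:~R * Phi (subz (addz q (evec m)) (evec l)) = 0.
    apply: big1 => l _; apply: big1 => m hml; apply: vz; left; right.
    by rewrite sum_subz sum_addz !sum_evec; exact: hS0.
  have t3 : \sum_(l < d) \sum_(m < d) 2 * S l m * (q m + 1)%:~R * X 0 l * Phi (addz q (evec m)) = 0.
    apply: big1 => l _; apply: big1 => m _; apply: vz; left; right.
    by rewrite sum_addz !sum_evec; exact: hS1.
  have t4 : \sum_(l < d) \sum_(m < d | m != l)
       2 * S l m * (q m + 1)%:~R * (q l + 1)%:~R * Phi (addz (addz q (evec m)) (evec l)) = 0.
    apply: big1 => l _; apply: big1 => m hml; apply: vz; left; right.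
    by rewrite !sum_addz !sum_evec; exact: hS2.
  have t5 : \sum_(l < d) 2 * (2 - S l l) * (q l + 1)%:~R * (q l + 2)%:~R
       * Phi (addz q (addz (evec l) (evec l))) = 0.
    apply: big1 => l _; apply: vz; left; right.
    by rewrite !sum_addz !sum_evec; exact: hS3.
  by rewrite /Kf t1 t2 t3 t4 t5 !(addr0, oppr0, subr0).
Qed.

Variable (a : ('I_d -> nat) -> R).

Lemma c1 (qn : 'I_d -> nat) m : ((zidx qn m + 1)%:~R : R) = (qn m).+1%:R.
Proof. by rewrite /zidx (_ : 1 = 1%N%:Z) // -PoszD addn1. Qed.
Lemma c2 (qn : 'I_d -> nat) m : ((zidx qn m + 2)%:~R : R) = (qn m).+2%:R.
Proof. by rewrite /zidx (_ : 2 = 2%N%:Z) // -PoszD addn2. Qed.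

Lemma Kf_rec (qn : 'I_d -> nat) : recursion_eq S X a Phi qn -> Kf (zidx qn) = - a qn.
Proof.
rewrite /recursion_eq /= => E.
set q := zidx qn.
have A1 : \sum_(l < d) \sum_(m < d | m != l) S l m * (q m + 1)%:~R * Phi (subz (addz q (evec m)) (evec l))
  = \sum_(l < d) \sum_(m < d | m != l) S l m * (qn m).+1%:R * Phi (subz (addz q (evec m)) (evec l)).
  by apply: eq_bigr => l _; apply: eq_bigr => m _; rewrite c1.
have A2 : \sum_(l < d) \sum_(m < d) 2 * S l m * (q m + 1)%:~R * X 0 l * Phi (addz q (evec m))
  = \sum_(l < d) \sum_(m < d) 2 * S l m * (qn m).+1%:R * X 0 l * Phi (addz q (evec m)).
  by apply: eq_bigr => l _; apply: eq_bigr => m _; rewrite c1.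
have A3 : \sum_(l < d) \sum_(m < d | m != l)
       2 * S l m * (q m + 1)%:~R * (q l + 1)%:~R * Phi (addz (addz q (evec m)) (evec l))
  = \sum_(l < d) \sum_(m < d | m != l)
       2 * S l m * (qn m).+1%:R * (qn l).+1%:R * Phi (addz (addz q (evec m)) (evec l)).
  by apply: eq_bigr => l _; apply: eq_bigr => m _; rewrite !c1.
have A4 : \sum_(l < d) 2 * (2 - S l l) * (q l + 1)%:~R * (q l + 2)%:~R
       * Phi (addz q (addz (evec l) (evec l)))
  = \sum_(l < d) 2 * (2 - S l l) * (qn l).+1%:R * (qn l).+2%:R
       * Phi (addz q (addz (evec l) (evec l))).
  by apply: eq_bigr => l _; rewrite c1 c2.
rewrite /Kf A1 A2 A3 A4.
rewrite E; ring.
Qed.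

Lemma Kf_zero : Kf (zidx (fun _ => 0%N)) = - a (fun _ => 0%N) + assoc_const S X a Phi.
Proof.
rewrite /assoc_const /=.
set q := zidx (fun _ => 0%N).
have e0 : forall l, ((q l)%:~R : R) = 0 by [].
have e1 : forall l, ((q l + 1)%:~R : R) = 1 by [].
have e2 : forall l, ((q l + 2)%:~R : R) = 2 by [].
have L1 : \sum_(l < d) S l l * (q l)%:~R * Phi q = 0.
  by apply: big1 => l _; rewrite e0 mulr0 mul0r.
have L2 : \sum_(l < d) \sum_(m < d | m != l)
    S l m * (q m + 1)%:~R * Phi (subz (addz q (evec m)) (evec l)) = 0.
  apply: big1 => l _; apply: big1 => m hml; apply: vz; left.
  apply: (@inOm_neg _ l); rewrite subzE addzE evecE evecN 1?eq_sym //.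
have A2 : \sum_(l < d) \sum_(m < d) 2 * S l m * (q m + 1)%:~R * X 0 l * Phi (addz q (evec m))
  = \sum_(l < d) \sum_(m < d) 2 * S l m * X 0 l * Phi (addz q (evec m)).
  by apply: eq_bigr => l _; apply: eq_bigr => m _; rewrite e1 mulr1.
have A3 : \sum_(l < d) \sum_(m < d | m != l)
       2 * S l m * (q m + 1)%:~R * (q l + 1)%:~R * Phi (addz (addz q (evec m)) (evec l))
  = \sum_(l < d) \sum_(m < d | m != l) 2 * S l m * Phi (addz (addz q (evec m)) (evec l)).
  by apply: eq_bigr => l _; apply: eq_bigr => m _; rewrite !e1 !mulr1.
have A4 : \sum_(l < d) 2 * (2 - S l l) * (q l + 1)%:~R * (q l + 2)%:~R
       * Phi (addz q (addz (evec l) (evec l)))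
  = \sum_(l < d) 4 * (2 - S l l) * Phi (addz q (addz (evec l) (evec l))).
  by apply: eq_bigr => l _; rewrite e1 e2; ring.
rewrite /Kf L1 L2 A2 A3 A4; ring.
Qed.

Definition zq (q : 'I_d -> int) : bool := [forall l, q l == 0].

Lemma omb_zidx (k : 'I_d -> nat) : (norm1 k <= p)%N -> omb (zidx k).
Proof.
move=> hk; apply/andP; split; first by apply/forallP => l.
by rewrite -sum_natz lez_nat.
Qed.

Lemma omb_inOm k : inOm p k -> omb k = false.
Proof.
case=> [[i hi]|hs]; apply/negbTE; rewrite negb_and.
  by apply/orP; left; apply/forallPn; exists i; rewrite -ltNge.
by apply/orP; right; rewrite -ltNge.
Qed.

Lemma hE (x : 'rV[R]_d) : sumOmega p (fun k => a k * hermiteM k x) =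
  \sum_(j : Bx d p) (if omb (toZ j) then a (fun l => `|toZ j l|%N) else 0) * Hz (toZ j) x.
Proof.
rewrite -(@sumOmega_box R d p (fun k => (if omb k then a (fun l => `|k l|%N) else 0) * Hz k x)).
  rewrite /sumOmega; apply: eq_bigr => k hk.
  by rewrite (omb_zidx hk); reflexivity.
by move=> k hk; rewrite omb_inOm // mul0r.
Qed.

Lemma Hz0 (x : 'rV[R]_d) : Hz (fun _ => 0) x = 1.
Proof. by rewrite /Hz big1. Qed.

Lemma auxG (z : nat) : z%:Z - 4 = 0 -> z = 4%N.
Proof. lia. Qed.

Lemma CE (C : R) (x : 'rV[R]_d) :
  C = \sum_(j : Bx d p) (if zq (toZ j) then C else 0) * Hz (toZ j) x.
Proof.
pose j0 : Bx d p := [ffun _ => inord 4].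
have t0 : toZ j0 = fun _ => 0.
  apply: funext => l; rewrite /toZ ffunE inordK //.
rewrite (bigD1 j0) //= big1 ?addr0.
  rewrite t0 Hz0 mulr1; have -> : zq (fun _ => 0) by apply/forallP.
  by [].
move=> j hj; case: ifP; last by rewrite mul0r.
move=> /forallP hz.
exfalso; move/negP: hj; apply; apply/eqP/ffunP => l; apply: val_inj.
rewrite ffunE /= inordK //; apply: auxG; exact: (eqP (hz l)).
Qed.

Lemma Kf_all (q : 'I_d -> int) (C : R) :
  recursion_system S X a p Phi -> C = assoc_const S X a Phi ->
  Kf q = - (if omb q then a (fun l => `|q l|%N) else 0) + (if zq q then C else 0).
Proof.
move=> [_ recs] ->.
case: (boolP (omb q)) => hom; last first.
  have -> : zq q = false.
    apply/negbTE; apply: contra hom => /forallP hz; apply/andP; split.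
      by apply/forallP => l; rewrite (eqP (hz l)).
    by rewrite big1 // => l _; apply/eqP.
  by rewrite Kf_vanish // oppr0 addr0.
pose qn := fun l => `|q l|%N.
have qE : q = zidx qn.
  move: hom => /andP[/forallP h _]; apply: funext => l; rewrite /zidx /qn gez0_abs //.
case: (boolP (zq q)) => hz.
  have q0 : qn = (fun _ => 0%N).
    by apply: funext => l; rewrite /qn; move/forallP: hz => /(_ l) /eqP ->.
  by rewrite -/qn q0 qE q0 Kf_zero.
rewrite addr0 -/qn qE Kf_rec //.
apply: recs; apply/andP; split; last first.
  rewrite -lez_nat sum_natz -qE; by case/andP: hom.
move/forallPn: hz => [l hl].
have hl' : (0 < qn l)%N by rewrite /qn absz_gt0.
apply: (leq_trans hl'); rewrite /norm1 (bigD1 l) //=; exact: leq_addr.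
Qed.
End Main.

Unset Implicit Arguments.
Set Strict Implicit.

Theorem mainTheorem2 (R : realType) (d p : nat) (X : 'rV[R]_d)
  (Sigma : 'M[R]_d) (a : ('I_d -> nat) -> R) (phit : ('I_d -> int) -> R) :
  (1 <= d)%N -> (1 <= p)%N ->
  Sigma^T = Sigma ->
  (forall v : 'rV[R]_d, v != 0 -> 0 < (v *m Sigma *m v^T) 0 0) ->
  recursion_system (invmx Sigma) X a p phit ->
  let S := invmx Sigma in
  let h := fun x : 'rV[R]_d => sumOmega p (fun k => a k * hermiteM k x) in
  let phi := fun x : 'rV[R]_d =>
    sumOmega p (fun k => phit (zidx k) * hermiteM k x) in
  let C := assoc_const S X a phit in
  forall x : 'rV[R]_d,
    - (\sum_(l < d) \sum_(m < d) (x 0 l - X 0 l) * S l m * partial m phi x)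
    + laplacian phi x
    = - h x + C.
Proof.
move=> hd hp hsym hpd hrec S h phi C x.
have vanish : forall k, inOm p k -> phit k = 0 by case: hrec => supp _; exact: supp.
have L := @LHS_eq R d p phit vanish S X x.
have hx : h x = \sum_(j : Bx d p) (if omb p (toZ j) then a (fun l => `|toZ j l|%N) else 0)
   * Hz (toZ j) x by exact: hE.
transitivity (\sum_(j : Bx d p) Hz (toZ j) x * Kf phit S X (toZ j)); first exact: L.
rewrite hx [in RHS](@CE R d p C x) -sumrN -big_split /=; apply: eq_bigr => j _.
rewrite (@Kf_all R d p phit vanish S X a (toZ j) C hrec erefl).
rewrite mulrDr mulrN mulrC; congr (- _ + _); exact: mulrC.
Qed.
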